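(* Let $h$ be a $k$-ary fixed function symbol of the term language, interpreted semantically as a differentiable function $h:\mathbb{R}^k\to\mathbb{R}$. Suppose that for each $i\in\{1,\dots,k\}$ there is a term $\partial_i h$ whose free variables are among $y_1,\dots,y_k$ such that for every state $\omega$, $$\omega[\![\partial_i h]\!] = \frac{\partial h}{\partial y_i}\big(\omega(y_1),\dots,\omega(y_k)\big).$$ Then for all differential-free terms $e_1,\dots,e_k$ the equation $$(h(e_1,\dots,e_k))' = \sum_{i=1}^k \partial_i h(e_1,\dots,e_k)\cdot (e_i)'$$ is valid (true in every state), where $\partial_i h(e_1,\dots,e_k)$ denotes the term obtained from $\partial_i h$ by substituting $e_j$ for $y_j$ ($j=1,\dots,k$).
   Context: Fix a set $V$ of real-valued variables such that each variable $x$ has an associated differential variable $x'\in V$. A state is a map $\omega:V\to\mathbb{R}$. Terms are generated by $e ::= x \mid c \mid e+e \mid e\cdot e \mid h(e_1,\dots,e_k)\mid (e)'$, where $x\in V$, $c$ is a rational constant, and $h$ ranges over finitely many fixed function symbols, each $k$-ary $h$ having a fixed interpretation as a $C^\infty$ function $\mathbb{R}^k\to\mathbb{R}$ (denoted by the same letter). A term is differential-free if it contains no subterm $(e)'$ and no differential variable. The value $\omega[\![e]\!]\in\mathbb{R}$ is defined as usual ($\omega[\![x]\!]=\omega(x)$, sums and products pointwise, $\omega[\![h(e_1,\dots,e_k)]\!]=h(\omega[\![e_1]\!],\dots,\omega[\![e_k]\!])$), and the differential has value $\omega[\![(e)']\!]=\sum_{x\in V}\omega(x')\,\frac{\partial \omega[\![e]\!]}{\partial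 x}$, where $\frac{\partial \omega[\![e]\!]}{\partial x}$ is the partial derivative of the value of $e$ with respect to the value of variable $x$, evaluated at $\omega$. An equation $e=\tilde e$ is valid if $\omega[\![e]\!]=\omega[\![\tilde e]\!]$ for all states $\omega$. *)

(* Defs.v *)
From Stdlib Require Import Reals QArith Qreals.
From Coquelicot Require Import Coquelicot.
From mathcomp Require Import all_boot.

Set Implicit Arguments.
Unset Strict Implicit.
Unset Printing Implicit Defensive.

Section Smooth.
Variable k : nat.

Definition upd_pt (p : 'I_k -> R) (i : 'I_k) (t : R) : 'I_k -> R :=
  fun j => if j == i then t else p j.

Definition pderiv (f : ('I_k -> R) -> R) (i : 'I_k) (p : 'I_k -> R) : R :=
  Derive (fun t => f (upd_pt p i t)) (p i).

(* continuity on R^k (sup-norm, equivalently Euclidean topology) *)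
Definition contk (f : ('I_k -> R) -> R) : Prop :=
  forall p eps, Rlt 0 eps -> exists d, Rlt 0 d /\
    forall q, (forall j, Rlt (Rabs (Rminus (q j) (p j))) d) -> Rlt (Rabs (Rminus (f q) (f p))) eps.

Fixpoint Cn (n : nat) (f : ('I_k -> R) -> R) : Prop :=
  contk f /\
  match n with
  | O => True
  | S m => forall i, (forall p, ex_derive (fun t => f (upd_pt p i t)) (p i))
                     /\ Cn m (pderiv f i)
  end.

Definition smooth (f : ('I_k -> R) -> R) : Prop := forall n, Cn n f.
End Smooth.

(* A variable is a base name b together with a number n of primes:
   (b, n) stands for b'''...' (n primes).  x' := prime x. *)
Definition tvar (B : eqType) : eqType := (B * nat)%type.
Definition prime (B : eqType) (x : tvar B) : tvar B := (x.1, x.2.+1).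
Definition is_dvar (B : eqType) (x : tvar B) : bool := (0 < x.2)%N.

Section Terms.
Variables (B : eqType) (F : Type) (ar : F -> nat).

Inductive term : Type :=
| TVar (x : tvar B)
| TConst (c : Q)
| TPlus (e1 e2 : term)
| TMult (e1 e2 : term)
| TApp (f : F) (args : 'I_(ar f) -> term)
| TDiff (e : term).

Fixpoint vars (e : term) : seq (tvar B) :=
  match e with
  | TVar x => [:: x]
  | TConst _ => [::]
  | TPlus e1 e2 | TMult e1 e2 => vars e1 ++ vars e2
  | TApp f a => flatten [seq vars (a i) | i <- enum 'I_(ar f)]
  | TDiff e => vars e ++ map (@prime B) (vars e)
  end.

Fixpoint dfree (e : term) : Prop :=
  match e with
  | TVar x => ~~ is_dvar x
  | TConst _ => True
  | TPlus e1 e2 | TMult e1 e2 => dfree e1 /\ dfree e2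
  | TApp f a => forall i, dfree (a i)
  | TDiff _ => False
  end.

Definition upd (w : tvar B -> R) (x : tvar B) (t : R) : tvar B -> R :=
  fun z => if z == x then t else w z.

Variable I : forall f : F, ('I_(ar f) -> R) -> R.

(* semantics; the sum over all x in V of w(x') * d[[e]]/dx is taken over the
   (finitely many) variables occurring in e, all other summands being 0. *)
Fixpoint eval (w : tvar B -> R) (e : term) {struct e} : R :=
  match e with
  | TVar x => w x
  | TConst c => Q2R c
  | TPlus e1 e2 => Rplus (eval w e1) (eval w e2)
  | TMult e1 e2 => Rmult (eval w e1) (eval w e2)
  | TApp f a => I (fun i => eval w (a i))
  | TDiff e =>
      foldr (fun x acc =>
               Rplus (Rmult (w (prime x)) (Derive (fun t => eval (upd w x t) e) (w x))) acc)
            R0 (undup (vars e))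
  end.

Fixpoint subst (s : tvar B -> term) (e : term) : term :=
  match e with
  | TVar x => s x
  | TConst c => TConst c
  | TPlus e1 e2 => TPlus (subst s e1) (subst s e2)
  | TMult e1 e2 => TMult (subst s e1) (subst s e2)
  | TApp f a => TApp (f:=f) (fun i => subst s (a i))
  | TDiff e => TDiff (subst s e)
  end.

Definition subst_map (k : nat) (y : 'I_k -> tvar B) (es : 'I_k -> term)
  : tvar B -> term :=
  fun x => match [pick j | y j == x] with Some j => es j | None => TVar x end.

Definition tsum (ts : seq term) : term := foldr TPlus (TConst 0%Q) ts.

Definition valid (e1 e2 : term) : Prop := forall w, eval w e1 = eval w e2.
End Terms.

Arguments TApp {B F ar} f args.

(* Main.v *)
Require Import Defs.
From Stdlib Require Import Reals QArith Qreals Lra FunctionalExtensionality.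
From Coquelicot Require Import Coquelicot.
From HB Require Import structures.
From mathcomp Require Import all_boot.

Set Implicit Arguments.
Unset Strict Implicit.
Unset Printing Implicit Defensive.
Open Scope R_scope.

Lemma Rplus_0_l' : left_id R0 Rplus. Proof. move=> x; lra. Qed.
Lemma Rplus_assoc' : associative Rplus. Proof. move=> x y z; lra. Qed.
Lemma Rplus_comm' : commutative Rplus. Proof. move=> x y; lra. Qed.
HB.instance Definition _ := Monoid.isComLaw.Build R R0 Rplus Rplus_assoc' Rplus_comm' Rplus_0_l'.

Lemma telescope (F : nat -> R) n a :
  \big[Rplus/R0]_(m <- iota a n) (F m.+1 - F m) = F (a + n)%N - F a.
Proof.
elim: n a => [|n IH] a /=; first by rewrite big_nil addn0; lra.
rewrite big_cons IH addSnnS; lra.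
Qed.

Lemma is_derive_big (T : Type) (s : seq T) (F : T -> R -> R) (D : T -> R) t0 :
  (forall i, is_derive (F i) t0 (D i)) ->
  is_derive (fun t => \big[Rplus/R0]_(i <- s) F i t) t0 (\big[Rplus/R0]_(i <- s) D i).
Proof.
move=> HD; elim: s => [|a s IH].
  rewrite big_nil; apply: (is_derive_ext (fun _ => R0)) => [t|]; first by rewrite big_nil.
  exact: (is_derive_const R0 t0).
rewrite big_cons.
apply: (is_derive_ext (fun t => F a t + \big[Rplus/R0]_(i <- s) F i t)) => [t|].
  by rewrite big_cons.
exact: (is_derive_plus _ _ _ _ _ (HD a) IH).
Qed.

Lemma deriv_cont g t0 D : is_derive g t0 D ->
  forall e, 0 < e -> exists d, 0 < d /\ forall t, Rabs (t - t0) < d -> Rabs (g t - g t0) < e.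
Proof.
move/is_derive_Reals => H.
have := @derivable_continuous_pt g t0 (exist _ D H).
move=> Hc e He; case: (Hc e He) => a [Ha Hb]; exists a; split => // t Ht.
case: (Req_dec t t0) => [->|ne]; first by rewrite Rminus_eq_0 Rabs_R0.
apply: Hb; split; [split; [done| by apply: not_eq_sym] | exact: Ht].
Qed.

Lemma unif_delta (T : eqType) (s : seq T) (P : T -> R -> Prop) t0 :
  (forall j, exists d, 0 < d /\ forall t, Rabs (t - t0) < d -> P j t) ->
  exists d, 0 < d /\ forall t, Rabs (t - t0) < d -> forall j, j \in s -> P j t.
Proof.
move=> H; elim: s => [|a s [d [Hd IH]]]; first by exists 1; split => //; lra.
case: (H a) => da [Hda Ha]; exists (Rmin d da); split; first exact: Rmin_pos.
move=> t Ht j; rewrite in_cons => /orP [/eqP ->|Hj].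
  apply: Ha; apply: Rlt_le_trans Ht _; exact: Rmin_r.
apply: IH => //; apply: Rlt_le_trans Ht _; exact: Rmin_l.
Qed.

Lemma minmax_bound a b c : Rmin a b <= c <= Rmax a b -> Rabs (c - a) <= Rabs (b - a).
Proof.
rewrite /Rmin /Rmax; case: Rle_dec => ? [? ?]; rewrite /Rabs;
repeat case: Rcase_abs; lra.
Qed.

Section Chain.
Variable k : nat.
Variable f : ('I_k -> R) -> R.
Hypothesis Hpd : forall i p, ex_derive (fun t => f (upd_pt p i t)) (p i).
Hypothesis Hpdc : forall i, contk (pderiv f i).

Lemma upd_pt_same (p : 'I_k -> R) i t s : upd_pt (upd_pt p i t) i s = upd_pt p i s.
Proof. apply: functional_extensionality => j; rewrite /upd_pt; by case: eqP. Qed.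
Lemma upd_pt_at (p : 'I_k -> R) i t : upd_pt p i t i = t.
Proof. by rewrite /upd_pt eqxx. Qed.

Lemma pd_derive (q : 'I_k -> R) i s : is_derive (fun u => f (upd_pt q i u)) s (pderiv f i (upd_pt q i s)).
Proof.
have H := Hpd i (upd_pt q i s); rewrite upd_pt_at in H.
have E : forall u, f (upd_pt (upd_pt q i s) i u) = f (upd_pt q i u)
  by move=> u; rewrite upd_pt_same.
rewrite /pderiv upd_pt_at (Derive_ext _ _ _ E).
apply: Derive_correct; exact: (ex_derive_ext _ _ _ E).
Qed.

Variables (g : 'I_k -> R -> R) (dg : 'I_k -> R) (t0 : R).
Hypothesis Hg : forall j, is_derive (g j) t0 (dg j).

Definition rr (m : nat) t : 'I_k -> R := fun j => if (j < m)%N then g j t else g j t0.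

Lemma rr_succ (m : 'I_k) t : rr m.+1 t = upd_pt (rr m t) m (g m t).
Proof.
apply: functional_extensionality => j; rewrite /rr /upd_pt.
case: (eqVneq j m) => [->|ne]; first by rewrite ltnSn.
by rewrite ltnS leq_eqVlt val_eqE (negbTE ne).
Qed.

Lemma rr_fix (m : 'I_k) t : rr m t = upd_pt (rr m t) m (g m t0).
Proof.
apply: functional_extensionality => j; rewrite /rr /upd_pt.
by case: (eqVneq j m) => [->|//]; rewrite ltnn.
Qed.

Lemma rr_t0 n : rr n t0 = fun j => g j t0.
Proof. apply: functional_extensionality => j; rewrite /rr; by case: ifP. Qed.

Lemma rr_0 t : rr 0 t = fun j => g j t0.
Proof. by []. Qed.

Lemma rr_k t : rr k t = fun j => g j t.
Proof. apply: functional_extensionality => j; by rewrite /rr ltn_ord. Qed.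


Lemma phi_deriv (m : 'I_k) :
  is_derive (fun t => f (rr m.+1 t) - f (rr m t)) t0 (pderiv f m (fun j => g j t0) * dg m).
Proof.
apply/is_derive_Reals => eps Heps.
set p := fun j => g j t0. set P := pderiv f m p. set D := dg m.
have HD1 : 0 < Rabs D + 1 by have := Rabs_pos D; lra.
have HP1 : 0 < Rabs P + 1 by have := Rabs_pos P; lra.
set eps1 := eps / (2 * (Rabs D + 1)).
have He1 : 0 < eps1 by apply: Rdiv_lt_0_compat; lra.
set u := eps / (2 * (Rabs P + 1)).
have Hu0 : 0 < u by apply: Rdiv_lt_0_compat; lra.
set eps2 := Rmin 1 u.
have He2 : 0 < eps2 by apply: Rmin_pos; lra.
case: (Hpdc m p He1) => d1 [Hd1 H1].
have [d2 [Hd2 H2]] := @unif_delta _ (enum 'I_k) (fun j t => Rabs (g j t - g j t0) < d1) t0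
   (fun j => deriv_cont (Hg j) Hd1).
have := Hg m; move/is_derive_Reals => Hgm. case: (Hgm eps2 He2) => d3 H3.
exists (mkposreal _ (Rmin_pos _ _ Hd2 (cond_pos d3))) => h hne /= hlt.
have hd2 : Rabs h < d2 by apply: Rlt_le_trans hlt (Rmin_l _ _).
have hd3 : Rabs h < d3 by apply: Rlt_le_trans hlt (Rmin_r _ _).
have Hgd : forall j, Rabs (g j (t0 + h) - g j t0) < d1.
  move=> j; apply: H2; last by rewrite mem_enum.
  by have -> : t0 + h - t0 = h by ring.
set q := rr m (t0 + h).
have Eq : f q = f (upd_pt q m (g m t0)) by rewrite /q -rr_fix.
have [c [Hc Ec]] := MVT_gen (fun s => f (upd_pt q m s)) (g m t0) (g m (t0+h))
   (fun s => pderiv f m (upd_pt q m s)) (fun x _ => pd_derive q m x)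
   (fun x _ => proj2 (continuity_pt_filterlim _ _)
       (ex_derive_continuous _ _ (ex_intro _ _ (pd_derive q m x)))).
set A := pderiv f m (upd_pt q m c).
set B := (g m (t0 + h) - g m t0) / h.
have Key : (f (rr m.+1 (t0 + h)) - f (rr m (t0 + h)) - (f (rr m.+1 t0) - f (rr m t0))) / h = A * B.
  rewrite !rr_t0 rr_succ -/q Eq /= in Ec *; rewrite Ec /A /B; field; exact: hne.
rewrite Key.
have HA : Rabs (A - P) < eps1.
  apply: H1 => j; rewrite /upd_pt; case: eqP => [->|_].
    apply: Rle_lt_trans (minmax_bound Hc) _; exact: Hgd.
  rewrite /q /rr /p; case: ifP => _; first exact: Hgd.
  by rewrite Rminus_eq_0 Rabs_R0.
have HB : Rabs (B - D) < eps2 by exact: H3.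
have HBb : Rabs B < Rabs D + 1.
  have := Rabs_triang (B - D) D; have := Rmin_l 1 u; rewrite -/eps2.
  have -> : B - D + D = B by ring. lra.
have HBD : Rabs (B - D) < u by apply: Rlt_le_trans HB (Rmin_r _ _).
have -> : A * B - P * D = (A - P) * B + P * (B - D) by ring.
apply: Rle_lt_trans (Rabs_triang _ _) _; rewrite (Rabs_mult (A - P) B) (Rabs_mult P (B - D)).
have T1 : Rabs (A - P) * Rabs B <= eps1 * (Rabs D + 1).
  apply: Rmult_le_compat; try exact: Rabs_pos; lra.
have T2 : Rabs P * Rabs (B - D) <= Rabs P * u.
  apply: Rmult_le_compat_l; [exact: Rabs_pos | lra].
have E1 : eps1 * (Rabs D + 1) = eps / 2 by rewrite /eps1; field; lra.
have E2 : u * (2 * (Rabs P + 1)) = eps by rewrite /u; field; lra.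
have E3 : Rabs P * u < eps / 2.
  have : 2 * (u * Rabs P) + 2 * u = eps by rewrite -E2; ring.
  rewrite Rmult_comm; lra.
lra.
Qed.

Lemma chain_rule :
  is_derive (fun t => f (fun j => g j t)) t0
    (\big[Rplus/R0]_(i <- enum 'I_k) (pderiv f i (fun j => g j t0) * dg i)).
Proof.
have E : forall t, f (fun j => g j t) = f (fun j => g j t0) +
    \big[Rplus/R0]_(i <- enum 'I_k) (f (rr i.+1 t) - f (rr i t)).
  move=> t.
  rewrite -(big_map (fun i : 'I_k => nat_of_ord i) xpredT (fun m => f (rr m.+1 t) - f (rr m t))).
  rewrite val_enum_ord telescope add0n rr_k rr_0; ring.
apply: (is_derive_ext (fun t => f (fun j => g j t0) +
    \big[Rplus/R0]_(i <- enum 'I_k) (f (rr i.+1 t) - f (rr i t)))) => [t|]; first by rewrite (E t).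
have H := is_derive_plus _ _ t0 _ _ (is_derive_const (f (fun j => g j t0)) t0)
   (@is_derive_big _ (enum 'I_k) _ _ t0 (fun i => phi_deriv i)).
have Z : forall x : R, plus zero x = x by move=> x; rewrite plus_zero_l.
by rewrite Z in H.
Qed.
End Chain.

Lemma foldr_big (T : Type) (s : seq T) (G : T -> R) :
  foldr (fun x acc => G x + acc) R0 s = \big[Rplus/R0]_(x <- s) G x.
Proof. elim: s => [|a s IH] /=; [by rewrite big_nil | by rewrite big_cons IH]. Qed.

Lemma big_distr_l (T : Type) (s : seq T) (a : R) (G : T -> R) :
  a * \big[Rplus/R0]_(x <- s) G x = \big[Rplus/R0]_(x <- s) (a * G x).
Proof.
elim: s => [|b s IH]; first by rewrite !big_nil Rmult_0_r.
by rewrite !big_cons Rmult_plus_distr_l IH.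
Qed.

Lemma big_restrict (T : eqType) (U s : seq T) (G : T -> R) :
  uniq U -> uniq s -> {subset s <= U} -> (forall x, x \notin s -> G x = 0) ->
  \big[Rplus/R0]_(x <- U) G x = \big[Rplus/R0]_(x <- s) G x.
Proof.
move=> uU us sub G0.
rewrite (bigID (fun x => x \in s)) /=.
rewrite [X in _ + X]big1; last first.
  move=> x /= Hx; apply: G0; exact: Hx.
rewrite Rplus_0_r -big_filter; apply: perm_big; apply: uniq_perm.
- exact: filter_uniq.
- exact: us.
- move=> x; rewrite mem_filter; case Hx: (x \in s) => //=; exact: sub.
Qed.

Section Terms.
Variables (B : eqType) (F : Type) (ar : F -> nat).
Variable I : forall f : F, ('I_(ar f) -> R) -> R.
Hypothesis HI : forall f, smooth (@I f).

Lemma upd_same_id (w : tvar B -> R) x : upd w x (w x) = w.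
Proof. apply: functional_extensionality => z; rewrite /upd; by case: eqP => [->|]. Qed.

Lemma eval_notin (e : term B ar) w x t : dfree e -> x \notin vars e ->
  eval I (upd w x t) e = eval I w e.
Proof.
elim: e w => [z|c|e1 IH1 e2 IH2|e1 IH1 e2 IH2|f a IH|e IH] w /=.
- move=> _; rewrite inE /upd => /negbTE; rewrite eq_sym => ->; done.
- done.
- by move=> [d1 d2]; rewrite mem_cat negb_or => /andP [n1 n2]; rewrite IH1 // IH2.
- by move=> [d1 d2]; rewrite mem_cat negb_or => /andP [n1 n2]; rewrite IH1 // IH2.
- move=> d nx; congr (@I _ _); apply: functional_extensionality => i.
  apply: IH => //; apply/negP => xi; move/negP: nx; apply; apply/flattenP.
  exists (vars (a i)) => //; apply: map_f; by rewrite mem_enum.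
- done.
Qed.

Lemma eval_deriv (e : term B ar) w x : dfree e ->
  forall t, ex_derive (fun s => eval I (upd w x s) e) t.
Proof.
elim: e => [z|c|e1 IH1 e2 IH2|e1 IH1 e2 IH2|f a IH|e IH] /=.
- move=> _ t; rewrite /upd; case: eqP => _; [exact: ex_derive_id | exact: ex_derive_const].
- move=> _ t; exact: ex_derive_const.
- move=> [d1 d2] t; exact: ex_derive_plus (IH1 d1 t) (IH2 d2 t).
- move=> [d1 d2] t; exact: ex_derive_mult (IH1 d1 t) (IH2 d2 t).
- move=> d t.
  have [_ H1] := HI f 1%nat.
  eexists; apply: (@chain_rule _ (@I f) (fun i => (H1 i).1) (fun i => (H1 i).2.1)
     (fun j s => eval I (upd w x s) (a j)) (fun j => Derive (fun s => eval I (upd w x s) (a j)) t) t).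
  move=> j; apply: Derive_correct; exact: IH.
- done.
Qed.

Lemma eval_subst (e : term B ar) s w : dfree e ->
  eval I w (subst s e) = eval I (fun x => eval I w (s x)) e.
Proof.
elim: e => [z|c|e1 IH1 e2 IH2|e1 IH1 e2 IH2|f a IH|e IH] /=.
- done.
- done.
- by move=> [d1 d2]; rewrite IH1 // IH2.
- by move=> [d1 d2]; rewrite IH1 // IH2.
- move=> d; congr (@I _ _); apply: functional_extensionality => i; exact: IH.
- done.
Qed.

Lemma eval_tsum (T : Type) (s : seq T) (G : T -> term B ar) w :
  eval I w (tsum [seq G i | i <- s]) = \big[Rplus/R0]_(i <- s) eval I w (G i).
Proof.
elim: s => [|a s IH] /=; first by rewrite big_nil /Q2R /= Rmult_0_l.
by rewrite big_cons IH.
Qed.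

End Terms.

Unset Implicit Arguments.

Theorem lemma2p5
  (B : eqType) (F : Type) (ar : F -> nat)
  (I : forall f : F, ('I_(ar f) -> R) -> R)
  (HI : forall f, smooth (I f))
  (h : F)
  (y : 'I_(ar h) -> tvar B) (Hy : injective y)
  (dh : 'I_(ar h) -> term B ar)
  (Hdh_df : forall i, dfree (dh i))
  (Hdh_fv : forall i x, x \in vars (dh i) -> exists j, y j = x)
  (Hdh : forall i (w : tvar B -> R),
      eval I w (dh i) = pderiv (I h) i (fun j => w (y j)))
  (es : 'I_(ar h) -> term B ar)
  (Hes : forall j, dfree (es j)) :
  valid I (TDiff (TApp h es))
          (tsum [seq TMult (subst (subst_map y es) (dh i)) (TDiff (es i))
                | i <- enum 'I_(ar h)]).
Proof.
move=> w.
have [_ H1] := HI h 1%nat.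
have HL : forall x, Derive (fun t => I h (fun j => eval I (upd w x t) (es j))) (w x) =
   \big[Rplus/R0]_(i <- enum 'I_(ar h))
      (pderiv (I h) i (fun j => eval I w (es j)) * Derive (fun t => eval I (upd w x t) (es i)) (w x)).
  move=> x; apply: is_derive_unique.
  have := @chain_rule _ (I h) (fun i => (H1 i).1) (fun i => (H1 i).2.1)
     (fun j t => eval I (upd w x t) (es j)) (fun i => Derive (fun t => eval I (upd w x t) (es i)) (w x)) (w x)
     (fun j => Derive_correct _ _ (eval_deriv HI w x (Hes j) (w x))).
  by rewrite upd_same_id.
have HS : (fun j => eval I w (subst_map y es (y j))) = (fun j => eval I w (es j)).
  apply: functional_extensionality => j; rewrite /subst_map.
  case: pickP => [j' /eqP Hj'|H]; first by rewrite (Hy _ _ Hj').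
  by have := H j; rewrite eqxx.
rewrite eval_tsum /= foldr_big.
under eq_bigr => x _ do rewrite HL big_distr_l.
rewrite exchange_big /=.
apply: eq_bigr => i _.
rewrite eval_subst // Hdh HS foldr_big big_distr_l.
rewrite (eq_bigr (fun x => pderiv (I h) i (fun j => eval I w (es j)) *
   (w (@Defs.prime B x) * Derive (fun t => eval I (upd w x t) (es i)) (w x)))); last by move=> x _; ring.
apply: big_restrict.
- exact: undup_uniq.
- exact: undup_uniq.
- move=> x; rewrite !mem_undup => Hx; apply/flattenP; exists (vars (es i)) => //.
  apply: map_f; by rewrite mem_enum.
- move=> x; rewrite mem_undup => Hx.
  rewrite (Derive_ext _ (fun _ => eval I w (es i))); last by move=> t; rewrite eval_notin.
  by rewrite Derive_const !Rmult_0_r.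
Qed.
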